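(* Let $T_1,T_2\in\mathcal{T}_n$ be binary phylogenetic trees. Let $G$ be the undirected multigraph with vertex set $\{1,\dots,2n-2\}$ and edge multiset $M(T_1)\sqcup M(T_2)$ (each member of $M(T_i)$ being a $2$-element set, viewed as an edge), and let $C$ be the set of connected components of $G$. Then $\mathit{TD}(T_1,T_2)=n-1-|C|$.
   Context: A phylogenetic tree is a finite rooted tree (arcs directed away from the root) with no node of outdegree $1$, whose leaves are injectively labeled; it is binary if every internal (non-leaf) node has exactly $2$ children. $\mathcal{T}_n$ denotes the set of phylogenetic trees with $n$ leaves labeled $1,\dots,n$, up to label-preserving isomorphism; $\mathcal{L}(T)$ is the set of leaves. The height of a node is the length of a longest directed path from it to a leaf. The bottom-up ordering of $T=(V,E)\in\mathcal{T}_n$ is the unique injective map $\ell:V\to\{1,\dots,|V|\}$ such that: (a) for a leaf $v$, $\ell(v)$ is its label; (b) if $\mathrm{height}(u)<\mathrm{height}(v)$ then $\ell(u)<\ell(v)$; (c) if $0<\mathrm{height}(u)=\mathrm{height}(v)$ and $\min\{\ell(x): x \text{ child of } u\}<\min\{\ell(x): x\text{ child of } v\}$ then $\ell(u)<\ell(v)$. The matching representation is $M(T)=\{\ell(\mathrm{children}(u)) : u\in V\setminus\mathcal{L}(T)\}$, a partition of $\{1,\dots,|V|-1\}$. For a subset $S=\{i_1<\dots<i_k\}$ with $k\ge 2$, $\kappa(S)$ is the cyclic permutation $(i_1,\dots,i_k)$. The matching permutation is $\pi(T)=\prod_{u\in V\setminus\mathcal{L}(T)}\kappa(\ell(\mathrm{children}(u)))$,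 regarded as an element of $\mathfrak{S}_{2n-2}$ fixing $|V|,\dots,2n-2$. Permutations are composed right to left. $\mathit{TD}'(T_1,T_2)$ is the least number of transpositions whose product is $\pi(T_2)^{-1}\pi(T_1)$ (zero if this is the identity), and the transposition distance is $\mathit{TD}(T_1,T_2)=\tfrac12\mathit{TD}'(T_1,T_2)$. *)

(* Defs.v *)
From HB Require Import structures.
From mathcomp Require Import all_boot all_order all_fingroup all_algebra.
Set Implicit Arguments. Unset Strict Implicit. Unset Printing Implicit Defensive.

(* Since children are unordered in the paper,
   a tree of T_n may have several representations; every notion below is
   invariant under swapping children. *)
Inductive btree : Type := BLeaf of nat | BNode of btree & btree.

Fixpoint btree_eqb (s t : btree) : bool :=
  match s, t with
  | BLeaf a, BLeaf b => a == b
  | BNode s1 s2, BNode t1 t2 => btree_eqb s1 t1 && btree_eqb s2 t2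
  | _, _ => false
  end.

Lemma btree_eqP : Equality.axiom btree_eqb.
Proof.
elim=> [a|s1 IH1 s2 IH2] [b|t1 t2] /=; try by constructor.
- by apply: (iffP eqP) => [->|[]].
- case: (IH1 t1) => [->|h]; last by constructor => -[].
  case: (IH2 t2) => [->|h]; last by constructor => -[].
  by constructor.
Qed.

HB.instance Definition _ := hasDecEq.Build btree btree_eqP.

Fixpoint leaves (t : btree) : seq nat :=
  match t with BLeaf a => [:: a] | BNode l r => leaves l ++ leaves r end.

Definition phylo (n : nat) (t : btree) : bool := perm_eq (leaves t) (iota 1 n).

(* Vertices of t, each identified with the subtree rooted at it (distinct
   vertices give distinct subtrees since leaf labels are distinct). *)
Fixpoint vertices (t : btree) : seq btree :=
  t :: match t with BLeaf _ => [::] | BNode l r => vertices l ++ vertices r end.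

Definition is_internal (t : btree) : bool :=
  if t is BNode _ _ then true else false.

Definition internals (t : btree) : seq btree := filter is_internal (vertices t).

Fixpoint height (t : btree) : nat :=
  match t with BLeaf _ => 0 | BNode l r => (maxn (height l) (height r)).+1 end.

Definition minchild (l : btree -> nat) (u : btree) : nat :=
  match u with BLeaf _ => 0 | BNode a b => minn (l a) (l b) end.

Definition bottom_up (t : btree) (l : btree -> nat) : bool :=
  let V := vertices t in
  [&& uniq (map l V),
      all (fun v => 1 <= l v <= size V) V,
      all (fun v => if v is BLeaf a then l v == a else true) V,
      all (fun u => all (fun v => (height u < height v) ==> (l u < l v)) V) V &
      all (fun u => all (fun v =>
             [&& 0 < height u, height u == height v &
                 minchild l u < minchild l v] ==> (l u < l v)) V) V].

(* Matching representation M(T): the list of the 2-element sets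
   l(children(u)) for u internal, each given as an (unordered) pair. *)
Definition matching (t : btree) (l : btree -> nat) : seq (nat * nat) :=
  [seq (match u with BLeaf _ => (0, 0) | BNode a b => (l a, l b) end)
  | u <- internals t].

(* Points 1..m are represented by 'I_m via i |-> i.+1. *)
Definition kappa (m : nat) (p : nat * nat) : {perm 'I_m} :=
  match insub (p.1.-1), insub (p.2.-1) with
  | Some x, Some y => tperm x y
  | _, _ => 1%g
  end.

(* Matching permutation pi(T) in S_{2n-2} (transpositions are disjoint,
   so the order of the product is irrelevant). *)
Definition matching_perm (n : nat) (t : btree) (l : btree -> nat)
  : {perm 'I_(2 * n - 2)} :=
  (\prod_(p <- matching t l) kappa (2 * n - 2) p)%g.

(* Paper's composition is right to left; mathcomp's (s * t) is "s then t".
   So pi(T2)^{-1} pi(T1) (paper) is pi(T1) * pi(T2)^-1 (mathcomp), and the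
   paper's product tau_1 ... tau_k is \prod over rev [:: tau_1; ...; tau_k]. *)
Definition prod_transp (m : nat) (s : seq ('I_m * 'I_m)) : {perm 'I_m} :=
  (\prod_(p <- rev s) tperm p.1 p.2)%g.

Definition min_transp (m : nat) (sigma : {perm 'I_m}) (k : nat) : Prop :=
  (exists s : seq ('I_m * 'I_m),
      [/\ size s = k, all (fun p => p.1 != p.2) s & sigma = prod_transp s])
  /\ (forall s : seq ('I_m * 'I_m),
      all (fun p => p.1 != p.2) s -> sigma = prod_transp s -> k <= size s).

Definition TDprime_is (n : nat) (t1 t2 : btree) (l1 l2 : btree -> nat) (k : nat)
  : Prop :=
  min_transp (matching_perm n t1 l1 * (matching_perm n t2 l2)^-1)%g k.

Definition TD_of (k : nat) : rat := (k%:R / 2)%R.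

Definition adj (m : nat) (E : seq (nat * nat)) : rel 'I_m :=
  fun x y => has (fun e => ((e.1 == x.+1) && (e.2 == y.+1))
                        || ((e.1 == y.+1) && (e.2 == x.+1))) E.

Definition components (m : nat) (E : seq (nat * nat)) : {set {set 'I_m}} :=
  [set [set y | connect (adj E) x y] | x : 'I_m].

(* Main.v *)
Require Import Defs.
From HB Require Import structures.
From mathcomp Require Import all_boot all_order all_fingroup all_algebra.
From mathcomp Require Import zify.
Set Implicit Arguments. Unset Strict Implicit. Unset Printing Implicit Defensive.

Section Transp.
Variable T : finType.
Implicit Types s : {perm T}.

Lemma card_porbits1 : #|porbits (1 : {perm T})| = #|T|.
Proof.
rewrite /porbits card_imset // => x y; move/eqP; rewrite eq_porbit_mem.
by rewrite porbit.unlock cycle1 imset_set1 /aperm perm1 inE=> /eqP.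
Qed.

Lemma porbits_le s : #|porbits s| <= #|T|.
Proof. exact: leq_imset_card. Qed.

Lemma porbits_lower (ts : seq (T * T)) : all (fun p => p.1 != p.2) ts ->
  #|T| <= #|porbits (\prod_(t <- ts) tperm t.1 t.2)%g| + size ts.
Proof.
elim: ts => [|t ts IH] /=; first by rewrite big_nil card_porbits1 addn0.
case/andP => d Hts; rewrite big_cons.
have := porbits_mul_tperm (\prod_(t <- ts) tperm t.1 t.2)%g t.1 t.2.
rewrite /= d; have := IH Hts; case: (_ \notin _) => /=; lia.
Qed.

Lemma porbits_upper n s : #|[pred x | s x != x]| < n ->
  exists ts : seq (T * T), [/\ size ts = #|T| - #|porbits s|,
    all (fun p => p.1 != p.2) ts & s = (\prod_(t <- ts) tperm t.1 t.2)%g].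
Proof.
elim: n s => // n IHn s /ltnSE-le_s_n.
case: (pickP (fun x => s x != x)) => [x s_x | s_id]; last first.
  have -> : s = 1%g by apply/permP=> x; apply/eqP/idPn; rewrite perm1 s_id.
  by exists nil; rewrite card_porbits1 subnn big_nil.
have [|ts [Hsz Hall def_s]] := IHn (tperm x ((s^-1)%g x) * s)%g; last first.
  exists ((x, (s^-1)%g x) :: ts); split.
  - have := porbits_mul_tperm s x ((s^-1)%g x).
    have -> : x \in porbit s ((s^-1)%g x).
      by rewrite -{1}(permKV s x); have := mem_porbit s 1 ((s^-1)%g x); rewrite expg1.
    have -> : x != (s^-1)%g x by rewrite -(canF_eq (permK _)).
    have := porbits_le (tperm x ((s^-1)%g x) * s)%g.
    have := porbits_le s.
    rewrite /= Hsz => A B C; move: C; rewrite addn1 /=; lia.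
  - by rewrite /= -(canF_eq (permK _)) s_x.
  - by rewrite big_cons -def_s mulgA tperm2 mul1g.
rewrite (cardD1 x) !inE s_x in le_s_n; apply: leq_ltn_trans le_s_n.
apply: subset_leq_card; apply/subsetP=> y.
rewrite !inE permM permE /= -(canF_eq (permK _)).
have [-> | ne_yx] := eqVneq y x; first by rewrite permKV eqxx.
by case: (s y =P x) => // -> _; rewrite eq_sym.
Qed.

End Transp.

Lemma min_transp_card m (s : {perm 'I_m}) : min_transp s (m - #|porbits s|).
Proof.
split.
  have [ts [Hsz Hall Hs]] := porbits_upper (ltnSn #|[pred x | s x != x]|).
  exists (rev ts); split.
  - by rewrite size_rev Hsz card_ord.
  - by rewrite all_rev.
  - by rewrite /prod_transp revK.
move=> s0 Hall ->; rewrite /prod_transp.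
have := porbits_lower (ts := rev s0); rewrite all_rev size_rev card_ord => H.
by rewrite leq_subLR; apply: H.
Qed.


Section Orbits.
Variable T : finType.
Variables s1 s2 : {perm T}.
Hypothesis inv1 : forall x, s1 (s1 x) = x.
Hypothesis inv2 : forall x, s2 (s2 x) = x.
Hypothesis nf1 : forall x, s1 x != x.
Hypothesis nf2 : forall x, s2 x != x.

Local Notation rho := (s1 * s2)%g.
Definition erel : rel T := fun x y => (s1 x == y) || (s2 x == y).

Lemma rhoE x : rho x = s2 (s1 x).
Proof. by rewrite permM. Qed.

Lemma s1rho x : s1 (rho x) = (rho^-1)%g (s1 x).
Proof. by apply: (@perm_inj _ rho); rewrite permKV !rhoE !inv1 inv2. Qed.

Lemma s1rhoX i x : s1 ((rho ^+ i)%g x) = ((rho^-1) ^+ i)%g (s1 x).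
Proof.
elim: i x => [|i IH] x; first by rewrite !expg0 !perm1.
by rewrite !expgS !permM IH -rhoE s1rho.
Qed.

Lemma rhoX_inv i z : (rho ^+ i)%g (((rho^-1) ^+ i)%g z) = z.
Proof. by rewrite expgVn permKV. Qed.

Lemma orbit_s1 x y : y \in porbit rho x -> s1 y \in porbit rho (s1 x).
Proof.
case/porbitP => i ->; rewrite s1rhoX -porbitV; exact: mem_porbit.
Qed.

Lemma orbit_rho x y : y \in porbit rho x -> rho y \in porbit rho x.
Proof.
case/porbitP => i ->; apply/porbitP; exists i.+1.
by rewrite expgSr; symmetry; apply: permM.
Qed.

Lemma not_orbit x : s1 x \notin porbit rho x.
Proof.
apply/porbitP => -[k Hk].
have [r [j Ek]] : exists r : bool, exists j, k = j + (r + j).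
  exists (odd k), k./2; have := odd_double_half k; rewrite -addnn; lia.
set y := (rho ^+ j)%g x.
have E1 : (rho ^+ j)%g (s1 y) = s1 x by rewrite /y s1rhoX rhoX_inv.
have E2 : s1 x = (rho ^+ j)%g ((rho ^+ r)%g y).
  by rewrite Hk Ek !expgD !permM.
have : s1 y = (rho ^+ r)%g y by apply: (@perm_inj _ (rho ^+ j)%g); rewrite E1.
case: r {Ek E2} => /= [|]; rewrite ?expg1 ?expg0 ?perm1 => H.
  by move: (nf2 (s1 y)); rewrite -rhoE -H eqxx.
by move: (nf1 y); rewrite H eqxx.
Qed.

Lemma erel_sym : symmetric erel.
Proof.
have S (s : {perm T}) (h : forall x, s (s x) = x) x y : (s x == y) = (s y == x).
  by apply/eqP/eqP => <-.
by move=> x y; rewrite /erel (S _ inv1) (S _ inv2).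
Qed.

Lemma connect_orbit x y : y \in porbit rho x -> connect erel x y.
Proof.
case/porbitP => i ->; elim: i => [|i IH]; first by rewrite expg0 perm1 connect0.
apply: connect_trans IH _; rewrite expgSr permM.
set z := (rho ^+ i)%g x.
apply: (connect_trans (y := s1 z)); apply: connect1; rewrite /erel ?eqxx //.
by rewrite rhoE eqxx orbT.
Qed.

Lemma comp_orbits x y :
  connect erel x y = (y \in porbit rho x) || (y \in porbit rho (s1 x)).
Proof.
apply/idP/idP => [C|].
  pose S := porbit rho x :|: porbit rho (s1 x).
  have cS1 u : u \in S -> s1 u \in S.
    rewrite !inE => /orP[/orbit_s1 H | /orbit_s1 H].
      by rewrite H orbT.
    by move: H; rewrite inv1 => ->.
  have cS2 u : u \in S -> s2 u \in S.
    move=> uS; have -> : s2 u = rho (s1 u) by rewrite rhoE inv1.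
    move: (cS1 u uS); rewrite !inE => /orP[/orbit_rho H | /orbit_rho H].
      by rewrite H.
    by rewrite H orbT.
  have cl : closed erel S.
    move=> u v /orP[/eqP <- | /eqP <-]; apply/idP/idP.
    - exact: cS1.
    - by move/cS1; rewrite inv1.
    - exact: cS2.
    - by move/cS2; rewrite inv2.
  have xS : x \in S by rewrite /S inE porbit_id.
  by have := closed_connect cl C; rewrite xS => /esym; rewrite in_setU.
case/orP => [/connect_orbit //| /connect_orbit].
apply: connect_trans; apply: connect1; by rewrite /erel eqxx.
Qed.

Definition compo x := [set y | connect erel x y].

Lemma compo_eq x y : connect erel x y -> compo x = compo y.
Proof.
move=> C; apply/setP => w; rewrite !inE; apply/idP/idP => D.
  by apply: connect_trans D; rewrite (sym_connect_sym erel_sym).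
exact: connect_trans D.
Qed.

Definition pO (O : {set T}) := [set y | [exists z in O, connect erel z y]].

Lemma pO_orbit x : pO (porbit rho x) = compo x.
Proof.
apply/setP => y; rewrite !inE; apply/existsP/idP => [[z /andP[zO c]]|c].
  exact: connect_trans (connect_orbit zO) c.
by exists x; rewrite porbit_id.
Qed.

Lemma card_porbits_rho : #|porbits rho| = 2 * #|[set compo x | x : T]|.
Proof.
rewrite -sum1_card (partition_big pO (mem [set compo x | x : T])) /=; last first.
  by move=> O /imsetP[x _ ->]; rewrite pO_orbit; apply: imset_f.
rewrite (eq_bigr (fun _ => 2)); first by rewrite sum_nat_const mulnC.
move=> C /imsetP[x _ ->]; rewrite sum1dep_card.
have -> : [set O | (O \in porbits rho) && (pO O == compo x)]
          = [set porbit rho x; porbit rho (s1 x)].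
  apply/setP => O; rewrite !inE; apply/andP/orP.
    case=> /imsetP[z _ ->]; rewrite pO_orbit => /eqP H.
    have : z \in compo x by rewrite -H inE connect0.
    rewrite inE comp_orbits -!eq_porbit_mem.
    by case/orP => ->; [left|right].
  case=> /eqP ->; rewrite imset_f // pO_orbit //; split => //.
  by rewrite (@compo_eq x (s1 x)) // connect1 // /erel eqxx.
rewrite cards2 eq_porbit_mem porbit_sym.
by rewrite (negbTE (not_orbit x)).
Qed.

End Orbits.


Definition pairp (m : nat) (x y : 'I_m) (e : nat * nat) : bool :=
  ((e.1 == x.+1) && (e.2 == y.+1)) || ((e.1 == y.+1) && (e.2 == x.+1)).

Lemma adjE m (E : seq (nat * nat)) (x y : 'I_m) : adj E x y = has (pairp x y) E.
Proof. by []. Qed.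

Definition flat (M : seq (nat * nat)) := flatten [seq [:: p.1; p.2] | p <- M].

Lemma flat_cons p M : flat (p :: M) = p.1 :: p.2 :: flat M.
Proof. by []. Qed.

Lemma kappa_val m p (x : 'I_m) : 0 < p.1 <= m -> 0 < p.2 <= m ->
  val (kappa m p x) =
    if x.+1 == p.1 then p.2.-1 else if x.+1 == p.2 then p.1.-1 else val x.
Proof.
case: p => a b /= Ha Hb; rewrite /kappa /=.
case: insubP => [u _ Eu|]; last lia.
case: insubP => [v _ Ev|]; last lia.
case: tpermP => [->|->|Hu Hv].
- by rewrite Ev Eu; case: ifP => /eqP ?; [lia | case: ifP => /eqP ?; lia].
- by rewrite Ev Eu; case: ifP => /eqP ?; [lia | case: ifP => /eqP ?; lia].
have Na : x.+1 != a by apply/eqP => E; apply: Hu; apply: val_inj; rewrite /= Eu; lia.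
have Nb : x.+1 != b by apply/eqP => E; apply: Hv; apply: val_inj; rewrite /= Ev; lia.
by rewrite (negbTE Na) (negbTE Nb).
Qed.

Section Match.
Variable m : nat.
Definition sig (M : seq (nat * nat)) : {perm 'I_m} := (\prod_(p <- M) kappa m p)%g.

Definition rng (M : seq (nat * nat)) := all (fun a => 0 < a <= m) (flat M).

Lemma sig_cons p M x : sig (p :: M) x = sig M (kappa m p x).
Proof. by rewrite /sig big_cons permM. Qed.

Lemma sig_fix M (x : 'I_m) : rng M -> x.+1 \notin flat M -> sig M x = x.
Proof.
elim: M => [|p M IH]; first by rewrite /sig big_nil perm1.
rewrite /rng flat_cons /= !inE => /and3P[Hp1 Hp2 HR] /norP[N1 /norP[N2 N]].
rewrite sig_cons; have -> : kappa m p x = x.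
  by apply: val_inj; rewrite kappa_val // (negbTE N1) (negbTE N2).
exact: IH.
Qed.

Lemma has_flat M (x y : 'I_m) : has (pairp x y) M -> (x.+1 \in flat M) && (y.+1 \in flat M).
Proof.
elim: M => [|p M IH] //=; rewrite !inE.
case/orP => [/orP[/andP[/eqP-> /eqP->]|/andP[/eqP-> /eqP->]]|/IH/andP[-> ->]];
  by rewrite ?eqxx ?orbT.
Qed.

Lemma no_loop M (x : 'I_m) : uniq (flat M) -> ~~ has (pairp x x) M.
Proof.
elim: M => [|p M IH] //=; rewrite !inE => /andP[/norP[N _] /andP[_ U]].
rewrite negb_or IH // andbT /pairp orbb; apply/andP => -[/eqP E1 /eqP E2].
by move: N; rewrite E1 E2 eqxx.
Qed.

Lemma sig_pair M (x y : 'I_m) : rng M -> uniq (flat M) -> has (pairp x y) M -> sig M x = y.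
Proof.
elim: M => [|p M IH] //=.
rewrite /rng flat_cons /= !inE => /and3P[Hp1 Hp2 HR] /andP[/norP[N12 N1] /andP[N2 U]].
rewrite sig_cons; case/orP => [P|H].
  have Hk : kappa m p x = y.
    apply: val_inj; rewrite kappa_val //.
    case/orP: (P) => /andP[/eqP -> /eqP ->]; rewrite eqxx //=.
    by case: ifP => [/eqP|//]; lia.
  rewrite Hk sig_fix //.
  case/orP: (P) => /andP[/eqP E1 /eqP E2]; first by rewrite -E2.
  by rewrite -E1.
have /andP[X1 _] := has_flat H.
rewrite (_ : kappa m p x = x); first exact: IH.
apply: val_inj; rewrite kappa_val //.
have -> : (x.+1 == p.1) = false by apply/negbTE; apply: contraNneq N1 => <-.
have -> : (x.+1 == p.2) = false by apply/negbTE; apply: contraNneq N2 => <-.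
by [].
Qed.

Lemma pair_exists M (x : 'I_m) : rng M -> x.+1 \in flat M -> exists y : 'I_m, has (pairp x y) M.
Proof.
elim: M => [|p M IH] //=.
rewrite /rng flat_cons /= !inE => /and3P[Hp1 Hp2 HR] /orP[E|/orP[E|H]].
- have Hy : p.2.-1 < m by lia.
  exists (Ordinal Hy); rewrite /pairp /= -(eqP E) eqxx /=.
  by apply/orP; left; apply/orP; left; apply/eqP; lia.
- have Hy : p.1.-1 < m by lia.
  exists (Ordinal Hy); rewrite /pairp /= -(eqP E) eqxx /=.
  by apply/orP; left; apply/orP; right; rewrite andbT; apply/eqP; lia.
- by have [y Hy] := IH HR H; exists y; rewrite Hy orbT.
Qed.

Variable M : seq (nat * nat).
Hypothesis HM : perm_eq (flat M) (iota 1 m).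

Lemma HM_rng : rng M.
Proof. by apply/allP => a; rewrite (perm_mem HM) mem_iota; lia. Qed.

Lemma HM_uniq : uniq (flat M).
Proof. by rewrite (perm_uniq HM) iota_uniq. Qed.

Lemma HM_in (x : 'I_m) : x.+1 \in flat M.
Proof. by rewrite (perm_mem HM) mem_iota; have := ltn_ord x; lia. Qed.

Lemma sigE (x y : 'I_m) : (sig M x == y) = has (pairp x y) M.
Proof.
have [y0 H0] := pair_exists HM_rng (HM_in x).
have E0 := sig_pair HM_rng HM_uniq H0.
apply/eqP/idP => [<-|H]; first by rewrite E0.
exact: sig_pair HM_rng HM_uniq H.
Qed.

Lemma sig_nf (x : 'I_m) : sig M x != x.
Proof. by rewrite sigE; apply: no_loop HM_uniq. Qed.

Lemma sig_inv (x : 'I_m) : sig M (sig M x) = x.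
Proof.
apply/eqP; rewrite sigE.
have := eqxx (sig M x); rewrite sigE.
by apply: sub_has => e; rewrite /pairp orbC.
Qed.

End Match.

Lemma internals_node a b : internals (BNode a b) = BNode a b :: internals a ++ internals b.
Proof. by rewrite /internals /= filter_cat. Qed.

Lemma matching_node a b l :
  matching (BNode a b) l = (l a, l b) :: matching a l ++ matching b l.
Proof. by rewrite /matching internals_node /= map_cat. Qed.

Lemma flat_cat M1 M2 : flat (M1 ++ M2) = flat M1 ++ flat M2.
Proof. by rewrite /flat map_cat flatten_cat. Qed.

Lemma vertices_head t : vertices t = t :: behead (vertices t).
Proof. by case: t. Qed.

Lemma flat_matching t l : perm_eq (flat (matching t l)) (map l (behead (vertices t))).
Proof.
elim: t => [a|a IHa b IHb]; first by rewrite /matching /internals.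
rewrite matching_node flat_cons flat_cat /= map_cat (vertices_head a) (vertices_head b) /=.
rewrite perm_cons.
apply: (@perm_trans _ (l b :: (map l (behead (vertices a)) ++ map l (behead (vertices b))))).
  by rewrite perm_cons; apply: perm_cat.
by rewrite -cat1s perm_catCA.
Qed.

Lemma leaves_pos t : 0 < size (leaves t).
Proof. by elim: t => // a IHa b IHb /=; rewrite size_cat; lia. Qed.

Lemma size_vertices t : size (vertices t) = (size (leaves t)).*2.-1.
Proof.
elim: t => // a IHa b IHb /=; rewrite !size_cat IHa IHb.
have := leaves_pos a; have := leaves_pos b; lia.
Qed.

Lemma height_le v t : v \in vertices t -> height v <= height t.
Proof.
elim: t => [a|a IHa b IHb]; first by rewrite inE => /eqP ->.
rewrite /= inE mem_cat => /orP[/eqP -> //|/orP[/IHa|/IHb]] /=; lia.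
Qed.

Lemma height_lt v t : v \in behead (vertices t) -> height v < height t.
Proof.
case: t => [a|a b] //=; rewrite mem_cat => /orP[/height_le|/height_le]; lia.
Qed.

Lemma tree_match n t l : phylo n t -> bottom_up t l ->
  perm_eq (flat (matching t l)) (iota 1 (2 * n - 2)).
Proof.
move=> Hp /and5P[U R _ Hh _].
have Hn : size (leaves t) = n by rewrite (perm_size Hp) size_iota.
have Hpos := leaves_pos t.
set V := vertices t in U R Hh *.
have HN : size V = n.*2.-1 by rewrite /V size_vertices Hn.
have tV : t \in V by rewrite /V (vertices_head t) inE eqxx.
have Hperm : perm_eq (map l V) (iota 1 (size V)).
  apply: uniq_perm => //; first exact: iota_uniq.
  have sub : {subset map l V <= iota 1 (size V)}.
    move=> x /mapP[v vV ->]; rewrite mem_iota; have /= := allP R v vV; lia.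
  have sz : size (iota 1 (size V)) <= size (map l V) by rewrite size_iota size_map.
  exact: (uniq_min_size U sub sz).2.
have Ht : l t = size V.
  have : size V \in map l V by rewrite (perm_mem Hperm) mem_iota; lia.
  case/mapP => v vV Ev.
  have /= Rt := allP R t tV.
  have [<- //|Nvt] := eqVneq v t.
  have vB : v \in behead V by move: vV; rewrite /V (vertices_head t) inE (negbTE Nvt).
  have := implyP (allP (allP Hh v vV) t tV) (height_lt vB).
  lia.
have Hiota : iota 1 (size V) = iota 1 (size V).-1 ++ [:: size V].
  have E : size V = (size V).-1 + 1 by lia.
  rewrite {1}E iotaD /= add1n prednK //; lia.
move: Hperm; rewrite {1}/V (vertices_head t) /= Ht Hiota perm_sym perm_catC /= perm_cons.
rewrite perm_sym => H.
have -> : 2 * n - 2 = (size V).-1 by lia.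
exact: perm_trans (flat_matching t l) H.
Qed.


Theorem proposition5 (n : nat) (T1 T2 : btree) (l1 l2 : btree -> nat) :
  phylo n T1 -> phylo n T2 ->
  bottom_up T1 l1 -> bottom_up T2 l2 ->
  exists k : nat, TDprime_is n T1 T2 l1 l2 k /\
    TD_of k = ((n%:Z - 1 - (#|components (2 * n - 2)
                    (matching T1 l1 ++ matching T2 l2)|)%:Z)%:~R)%R.
Proof.
move=> P1 P2 B1 B2.
have H1 := tree_match P1 B1; have H2 := tree_match P2 B2.
have npos : 0 < n.
  by have := leaves_pos T1; rewrite (perm_size P1) size_iota.
pose s1 : {perm 'I_(2 * n - 2)} := sig (2 * n - 2) (matching T1 l1).
pose s2 : {perm 'I_(2 * n - 2)} := sig (2 * n - 2) (matching T2 l2).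
have E1 : matching_perm n T1 l1 = s1 by [].
have E2 : matching_perm n T2 l2 = s2 by [].
have V2 : (s2^-1)%g = s2.
  by apply/permP => x; apply: (@perm_inj _ s2); rewrite permKV sig_inv.
exists (2 * n - 2 - #|porbits (s1 * s2^-1)%g|); split.
  by rewrite /TDprime_is E1 E2; apply: min_transp_card.
have Hc : components (2 * n - 2) (matching T1 l1 ++ matching T2 l2)
          = [set compo s1 s2 x | x : 'I_(2 * n - 2)].
  rewrite /components; apply: eq_imset => x; apply/setP => y; rewrite !inE.
  apply: eq_connect => u v; rewrite adjE has_cat -!sigE //.
rewrite Hc V2 (card_porbits_rho (sig_inv H1) (sig_inv H2) (sig_nf H1) (sig_nf H2)).
have := porbits_le (s1 * s2)%g; rewrite card_ord (card_porbits_rho (sig_inv H1) (sig_inv H2) (sig_nf H1) (sig_nf H2)).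
set c := #|_| => Hle.
have -> : (n%:Z - 1 - c%:Z = (n - 1 - c)%N%:Z)%R by lia.
have -> : (2 * n - 2 - 2 * c = (n - 1 - c) * 2)%N by lia.
rewrite /TD_of GRing.natrM GRing.mulfK //.
Qed.
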